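(* Let $p,q\in\mathbb{N}$ be co-prime with $p/q\in[0,1]$. For $n\ge2$ let $Z_n=\{z\in B^n:\ p\sum_{i=1}^n\alpha_i2^{-i}-q\sum_{i=1}^n\beta_i2^{-i}=0\}$, where $z_i=(\alpha_i,\beta_i)$. Then $$\log\frac{\mathcal{N}_n(D,D')}{\mathcal{N}_{n-1}(D,D')}\le\sum_{x\in Z_n}\sup_{y\in[x]}\phi(y).$$
   Context: $D=\{0,1,p/q\}$, $D'=\{\frac{x+i}{2}:i\in D\}$, and $\mathcal{N}_n(D,D')$ is the number of pairs $(a,b)\in D^n\times D^n$ with $\sum_{i=1}^na_i2^{-i}=\sum_{i=1}^nb_i2^{-i}$ (equivalently $F_a=F_b$ where $F_a=F_{a_1}\circ\cdots\circ F_{a_n}$, $F_i(x)=\frac{x+i}2$). $B=\{(0,0),(1,0),(0,1),(1,1)\}$, ordered this way to index rows/columns $1,\dots,4$; for $x\in B^n$, $[x]=\{\omega\in B^{\mathbb{N}}:\omega_1\cdots\omega_n=x\}$. The matrices are $A_{(0,0)}=\begin{pmatrix}3&1&1&1\\0&1&0&0\\0&0&1&0\\0&0&0&1\end{pmatrix}$, $A_{(1,0)}=\begin{pmatrix}1&0&1&0\\1&3&0&1\\0&0&0&0\\0&0&1&1\end{pmatrix}$, $A_{(0,1)}=\begin{pmatrix}1&1&0&0\\0&0&0&0\\1&0&3&1\\0&1&0&1\end{pmatrix}$, $A_{(1,1)}=\begin{pmatrix}1&0&0&0\\0&1&0&0\\0&0&1&0\\1&1&1&3\end{pmatrix}$,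 and for $z\in B^{\mathbb{N}}$, $$\phi(z)=\limsup_{n\to\infty}\log\frac{(1,1,1,1)A_{z_1}A_{z_2}\cdots A_{z_n}(1,0,0,0)^T}{(1,1,1,1)A_{z_2}A_{z_3}\cdots A_{z_n}(1,0,0,0)^T}.$$ *)

(* Defs.v *)
From HB Require Import structures.
From mathcomp Require Import all_boot all_order all_algebra.
From mathcomp Require Import all_classical all_reals all_analysis.
Set Implicit Arguments. Unset Strict Implicit. Unset Printing Implicit Defensive.
Import Order.TTheory GRing.Theory Num.Theory.
Local Open Scope ring_scope.

(* The digit set D = {0, 1, p/q} (as a set of rationals; duplicates are
   irrelevant since seq_sub is the subtype {x | x \in s}). *)
Definition digits (p q : nat) : seq rat := [:: 0; 1; p%:Q / q%:Q].
Definition Dt (p q : nat) := seq_sub (digits p q).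

(* value sum_{i=1}^n a_i 2^{-i}, with a_{i+1} stored at index i *)
Definition dval (p q n : nat) (a : {ffun 'I_n -> Dt p q}) : rat :=
  \sum_(i < n) ssval (a i) * (2%:Q ^- i.+1).

Definition NN (p q n : nat) : nat :=
  #|[set ab : {ffun 'I_n -> Dt p q} * {ffun 'I_n -> Dt p q}
       | dval ab.1 == dval ab.2]|.

(* B = {0,1}^2; (alpha, beta) = (z.1, z.2).
   Order (0,0),(1,0),(0,1),(1,1) indexes rows/columns 0..3. *)
Definition B := (bool * bool)%type.

Definition Amat (R : realType) (z : B) : 'M[R]_4 :=
  match z with
  | (false, false) => \matrix_(i < 4, j < 4)
      nth 0 (nth [::] [:: [:: 3; 1; 1; 1]; [:: 0; 1; 0; 0];
                          [:: 0; 0; 1; 0]; [:: 0; 0; 0; 1]] i) j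
  | (true, false) => \matrix_(i < 4, j < 4)
      nth 0 (nth [::] [:: [:: 1; 0; 1; 0]; [:: 1; 3; 0; 1];
                          [:: 0; 0; 0; 0]; [:: 0; 0; 1; 1]] i) j
  | (false, true) => \matrix_(i < 4, j < 4)
      nth 0 (nth [::] [:: [:: 1; 1; 0; 0]; [:: 0; 0; 0; 0];
                          [:: 1; 0; 3; 1]; [:: 0; 1; 0; 1]] i) j
  | (true, true) => \matrix_(i < 4, j < 4)
      nth 0 (nth [::] [:: [:: 1; 0; 0; 0]; [:: 0; 1; 0; 0];
                          [:: 0; 0; 1; 0]; [:: 1; 1; 1; 3]] i) j
  end.

Definition colsum0 (R : realType) (M : 'M[R]_4) : R := \sum_(j < 4) M j 0.

(* A_{z_{m+1}} ... A_{z_n}  (z_k stored at index k-1) *)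
Definition Aprod (R : realType) (z : nat -> B) (m n : nat) : 'M[R]_4 :=
  \big[mulmx/1%:M]_(m <= i < n) Amat R (z i).

Definition phi (R : realType) (z : nat -> B) : \bar R :=
  limn_esup (fun n => (ln (colsum0 (Aprod R z 0 n) / colsum0 (Aprod R z 1 n)))%:E).

Definition cyl (n : nat) (x : {ffun 'I_n -> B}) : set (nat -> B) :=
  [set w | forall i : 'I_n, w i = x i].

Definition Zset (p q n : nat) : {set {ffun 'I_n -> B}} :=
  [set x : {ffun 'I_n -> B} |
     p%:Q * (\sum_(i < n) (nat_of_bool (x i).1)%:Q * (2%:Q ^- i.+1))
     - q%:Q * (\sum_(i < n) (nat_of_bool (x i).2)%:Q * (2%:Q ^- i.+1)) == 0].

(* Main.v *)
Require Import Defs.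
From HB Require Import structures.
From mathcomp Require Import all_boot all_order all_algebra.
From mathcomp Require Import all_classical all_reals all_analysis.
From mathcomp Require Import zify ring lra.
Import Order.TTheory GRing.Theory Num.Theory.
Set Implicit Arguments. Unset Strict Implicit. Unset Printing Implicit Defensive.
Local Open Scope ring_scope.

Definition cnt p q m (w : rat) : nat :=
  #|[pred b : {ffun 'I_m -> Dt p q} | dval b == w]|.

Lemma NN_sum p q m :
  NN p q m = (\sum_(b : {ffun 'I_m -> Dt p q}) cnt p q m (dval b))%N.
Proof.
rewrite /NN -sum1_card.
rewrite (eq_bigl (fun ab : {ffun 'I_m -> Dt p q} * {ffun 'I_m -> Dt p q} =>
   predT ab.1 && (dval ab.2 == dval ab.1))); last first.
  by move=> [a b]; rewrite inE /= eq_sym.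
rewrite -(pair_big_dep predT (fun a b => dval b == dval a) (fun _ _ => 1%N)) /=.
apply: eq_bigr => a _; rewrite sum1_card /cnt; apply: eq_card => b.
by rewrite !inE.
Qed.

Definition fcons p q m (d : Dt p q) (a : {ffun 'I_m -> Dt p q}) :
  {ffun 'I_m.+1 -> Dt p q} :=
  [ffun i => if unlift ord0 i is Some j then a j else d].
Definition ftl p q m (a : {ffun 'I_m.+1 -> Dt p q}) : {ffun 'I_m -> Dt p q} :=
  [ffun j => a (lift ord0 j)].

Lemma sum_cons p q m (F : {ffun 'I_m.+1 -> Dt p q} -> nat) :
  (\sum_a F a = \sum_(d : Dt p q) \sum_(a : {ffun 'I_m -> Dt p q}) F (fcons d a))%N.
Proof.
rewrite pair_big /=.
rewrite (reindex (fun x : Dt p q * {ffun 'I_m -> Dt p q} => fcons x.1 x.2)) //=.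
exists (fun a : {ffun 'I_m.+1 -> Dt p q} => (a ord0, ftl a)) => [[d a] _|a _] /=.
  rewrite /fcons /ftl ffunE unlift_none; congr pair.
  by apply/ffunP => j; rewrite !ffunE liftK.
apply/ffunP => i; rewrite /fcons /ftl !ffunE.
case: unliftP => [j ->|->] //; by rewrite ffunE.
Qed.

Lemma dval_cons p q m d (a : {ffun 'I_m -> Dt p q}) :
  dval (fcons d a) = (ssval d + dval a) / 2.
Proof.
rewrite /dval big_ord_recl /fcons ffunE unlift_none.
under eq_bigr do rewrite ffunE liftK lift0.
rewrite mulrDl mulr_suml; congr (_ + _).
apply: eq_bigr => i _; rewrite -mulrA; congr (_ * _).
by rewrite [in LHS]exprS invfM mulrC.
Qed.

Lemma cnt_cons p q m v :
  cnt p q m.+1 v = (\sum_(d : Dt p q) cnt p q m (2 * v - ssval d))%N.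
Proof.
rewrite /cnt -sum1_card big_mkcond /= sum_cons.
apply: eq_bigr => d _; rewrite -sum1_card [RHS]big_mkcond; apply: eq_bigr => a _.
rewrite !inE dval_cons.
have -> : ((ssval d + dval a) / 2 == v) = (dval a == 2 * v - ssval d).
  apply/eqP/eqP => h; [rewrite -h | rewrite h]; by field.
by [].
Qed.

Lemma ssval_range (p q : nat) (hr : 0 <= p%:Q / q%:Q <= 1) (d : Dt p q) :
  0 <= ssval d <= 1.
Proof. by have := ssvalP d; rewrite !inE => /or3P [] /eqP ->. Qed.

Lemma geo m : \sum_(i < m) (2%:Q ^- i.+1) = 1 - 2%:Q ^- m.
Proof.
elim: m => [|m IH]; first by rewrite big_ord0 expr0 invr1 subrr.
rewrite big_ord_recr /= IH [in RHS]exprS invfM.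
have : 2%:Q ^- m.+1 = 2^-1 * 2 ^- m by rewrite exprS invfM.
move=> ->; by field.
Qed.

Lemma dval_ge0 (p q : nat) m (hr : 0 <= p%:Q / q%:Q <= 1) (a : {ffun 'I_m -> Dt p q}) :
  0 <= dval a.
Proof.
apply: sumr_ge0 => i _; apply: mulr_ge0; first by case/andP: (ssval_range hr (a i)).
by rewrite invr_ge0 exprn_ge0.
Qed.

Lemma dval_lt1 (p q : nat) m (hr : 0 <= p%:Q / q%:Q <= 1) (a : {ffun 'I_m -> Dt p q}) :
  dval a < 1.
Proof.
apply: (le_lt_trans (y := \sum_(i < m) (2%:Q ^- i.+1))).
  apply: ler_sum => i _; apply: ler_piMl; first by rewrite invr_ge0 exprn_ge0.
  by case/andP: (ssval_range hr (a i)).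
rewrite geo; have : 0 < 2%:Q ^- m by rewrite invr_gt0 exprn_gt0.
lra.
Qed.

Lemma cnt_out (p q : nat) m (hr : 0 <= p%:Q / q%:Q <= 1) w :
  (w < 0) || (1 <= w) -> cnt p q m w = 0%N.
Proof.
move=> hw; apply: eq_card0 => b; rewrite !inE; apply/negP => /eqP hb.
have := dval_ge0 hr b; have := dval_lt1 hr b; rewrite hb.
by case/orP: hw => h1 h2 h3; lra.
Qed.

Definition Vs p q m : seq rat :=
  undup (map (@dval p q m) (enum {: {ffun 'I_m -> Dt p q}})).

Lemma Vs_uniq p q m : uniq (Vs p q m).
Proof. exact: undup_uniq. Qed.

Lemma in_Vs p q m (b : {ffun 'I_m -> Dt p q}) : dval b \in Vs p q m.
Proof. by rewrite mem_undup; apply: map_f; rewrite mem_enum. Qed.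

Lemma sum_val (p q : nat) m (F : rat -> nat) :
  (\sum_(b : {ffun 'I_m -> Dt p q}) F (dval b) =
   \sum_(v <- Vs p q m) cnt p q m v * F v)%N.
Proof.
have E v : (cnt p q m v * F v =
   \sum_(b : {ffun 'I_m -> Dt p q}) (if dval b == v then F v else 0))%N.
  rewrite /cnt -sum1_card big_distrl /= big_mkcond /=.
  by apply: eq_bigr => b _; rewrite inE; case: eqP => //; rewrite mul1n.
under [RHS]eq_bigr do rewrite E.
rewrite exchange_big /=; apply: eq_bigr => b _.
rewrite (bigD1_seq (dval b)) ?in_Vs ?Vs_uniq //= eqxx big1 ?addn0 // => v.
by rewrite eq_sym => /negPf ->.
Qed.

Lemma Vs_range (p q : nat) m (hr : 0 <= p%:Q / q%:Q <= 1) v :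
  v \in Vs p q m -> 0 <= v < 1.
Proof.
rewrite mem_undup => /mapP [b _ ->].
by rewrite dval_ge0 ?dval_lt1.
Qed.

Lemma count_le1 (T U : eqType) (g : T -> U) (s : seq T) w :
  {in s &, injective g} -> uniq s ->
  (\sum_(v <- s) (g v == w) <= 1)%N.
Proof.
move=> ginj us.
have -> : (\sum_(v <- s) (g v == w))%N = count (pred1 w) (map g s).
  rewrite count_map; elim: s {ginj us} => [|x s IH]; first by rewrite big_nil.
  by rewrite big_cons IH /=.
rewrite count_uniq_mem ?map_inj_in_uniq //; by case: (_ \in _).
Qed.

Lemma amgm (x y : nat) : (2 * (x * y) <= x * x + y * y)%N.
Proof. by case: (nat_Cauchy x y); rewrite !expnS !expn0 !muln1. Qed.

Lemma shift_le (p q : nat) m (hr : 0 <= p%:Q / q%:Q <= 1) (t : rat) :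
  0 <= t <= 1 ->
  (\sum_(b : {ffun 'I_m -> Dt p q})
     (cnt p q m (dval b + t) + cnt p q m (dval b + t - 1)) <= NN p q m)%N.
Proof.
move=> ht.
pose g (v : rat) := if v + t < 1 then v + t else v + t - 1.
have E (b : {ffun 'I_m -> Dt p q}) : (cnt p q m (dval b + t) + cnt p q m (dval b + t - 1) =
            cnt p q m (g (dval b)))%N.
  have := dval_ge0 hr b; have := dval_lt1 hr b.
  rewrite /g; case: ifP => h h1 h2.
    by rewrite (@cnt_out _ _ _ hr (dval b + t - 1)) ?addn0 //; apply/orP; left; lra.
  rewrite (@cnt_out _ _ _ hr (dval b + t)) //; apply/orP; right.
  by move/negbT: h; rewrite -leNgt.
under eq_bigr do rewrite E.
have ginj : {in Vs p q m &, injective g}.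
  move=> v w /(Vs_range hr) hv /(Vs_range hr) hw; rewrite /g.
  by case: ifP => h1; case: ifP => h2 => h; move: h hv hw h1 h2; lra.
set X := (\sum_b _)%N.
have HX : X = (\sum_(v <- Vs p q m) cnt p q m v * cnt p q m (g v))%N.
  by rewrite /X (sum_val p q m (fun v => cnt p q m (g v))).
have H1 : (\sum_(v <- Vs p q m) cnt p q m v * cnt p q m v)%N = NN p q m.
  by rewrite NN_sum (sum_val p q m (cnt p q m)).
have H2 : (\sum_(v <- Vs p q m) cnt p q m (g v) * cnt p q m (g v) <= NN p q m)%N.
  have E2 v : (cnt p q m (g v) * cnt p q m (g v) =
     \sum_(b : {ffun 'I_m -> Dt p q}) (if g v == dval b then cnt p q m (dval b) else 0))%N.
    rewrite {1}/cnt -sum1_card big_distrl /= big_mkcond /=.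
    apply: eq_bigr => b _; rewrite inE eq_sym; case: eqP => [->|]; by rewrite ?mul1n.
  under eq_bigr do rewrite E2.
  rewrite exchange_big /= NN_sum; apply: leq_sum => b _.
  have -> : (\sum_(v <- Vs p q m) (if g v == dval b then cnt p q m (dval b) else 0) =
      cnt p q m (dval b) * \sum_(v <- Vs p q m) (g v == dval b))%N.
    rewrite big_distrr /=; apply: eq_bigr => v _; case: eqP => _ /=.
      by rewrite muln1.
    by rewrite muln0.
  by rewrite -{2}(muln1 (cnt p q m (dval b))) leq_mul2l count_le1 ?orbT // Vs_uniq.
have H3 : (2 * X <= NN p q m + NN p q m)%N.
  rewrite HX big_distrr /= -{1}H1.
  apply: (leq_trans (n := (\sum_(v <- Vs p q m) (cnt p q m v * cnt p q m v +
      cnt p q m (g v) * cnt p q m (g v)))%N)).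
    by apply: leq_sum => v _; apply: amgm.
  by rewrite big_split /= leq_add2l.
lia.
Qed.

Lemma sum_Dt (p q : nat) (G : rat -> nat) :
  (\sum_(d : Dt p q) G (ssval d) <= G 0%R + G 1%R + G (p%:Q / q%:Q))%N.
Proof.
apply: (leq_trans (n := (\sum_(d : Dt p q) \sum_(x <- digits p q)
                           (if ssval d == x then G x else 0))%N)).
  apply: leq_sum => d _; rewrite /digits !big_cons big_nil.
  have := ssvalP d; rewrite !inE => /or3P [] /eqP ->; rewrite eqxx;
    [by rewrite leq_addr | by rewrite addnCA leq_addr | by rewrite addn0 addnA leq_addl].
rewrite exchange_big /= /digits !big_cons big_nil addn0 -!addnA.
have H x : (\sum_(d : Dt p q) (if ssval d == x then G x else 0) <= G x)%N.
  have -> : (\sum_(d : Dt p q) (if ssval d == x then G x else 0) =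
             G x * \sum_(d : Dt p q) (ssval d == x))%N.
    rewrite big_distrr /=; apply: eq_bigr => d _; case: eqP => _ /=.
      by rewrite muln1.
    by rewrite muln0.
  rewrite -{2}(muln1 (G x)) leq_mul2l; apply/orP; right.
  have -> : (\sum_(d : Dt p q) (ssval d == x))%N = #|[pred d : Dt p q | ssval d == x]|.
    by rewrite -sum1_card [RHS]big_mkcond; apply: eq_bigr => d _; rewrite inE; case: eqP.
  apply/card_le1_eqP => u v; rewrite !inE => /eqP hu /eqP hv.
  by apply: val_inj; rewrite /= hu hv.
by rewrite leq_add ?H // leq_add ?H.
Qed.

Definition KK (p q m : nat) (x y : rat) : nat :=
  (\sum_(b : {ffun 'I_m -> Dt p q}) cnt p q m (x + dval b - y))%N.

Lemma NN_succ_le (p q m : nat) :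
  (NN p q m.+1 <= \sum_(x <- digits p q) \sum_(y <- digits p q) KK p q m x y)%N.
Proof.
rewrite NN_sum sum_cons /=.
have h2 (x : rat) : 2 * (x / 2) = x by field.
apply: (leq_trans (n := (\sum_(d' : Dt p q) \sum_(d : Dt p q)
   \sum_(b' : {ffun 'I_m -> Dt p q}) cnt p q m (ssval d' + dval b' - ssval d))%N)).
  rewrite leq_eqVlt; apply/orP; left; apply/eqP.
  apply: eq_bigr => d' _; rewrite [RHS]exchange_big; apply: eq_bigr => b' _.
  by rewrite dval_cons cnt_cons h2.
apply: (leq_trans (n := (\sum_(d' : Dt p q) \sum_(y <- digits p q) KK p q m (ssval d') y)%N)).
  apply: leq_sum => d' _; rewrite /digits !big_cons big_nil addn0 addnA.
  exact: (sum_Dt p q (fun y => KK p q m (ssval d') y)).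
apply: (leq_trans (sum_Dt p q (fun x => \sum_(y <- digits p q) KK p q m x y)%N)).
by rewrite /digits !big_cons !big_nil !addn0 !addnA.
Qed.

Lemma KK_xx (p q m : nat) x : KK p q m x x = NN p q m.
Proof.
rewrite /KK NN_sum; apply: eq_bigr => b _; congr (cnt _ _ _ _); ring.
Qed.

Lemma KK_01 (p q m : nat) (hr : 0 <= p%:Q / q%:Q <= 1) : KK p q m 0 1 = 0%N.
Proof.
rewrite /KK big1 // => b _; apply: cnt_out => //.
have := dval_lt1 hr b; move=> h; apply/orP; left; lra.
Qed.

Lemma KK_10 (p q m : nat) (hr : 0 <= p%:Q / q%:Q <= 1) : KK p q m 1 0 = 0%N.
Proof.
rewrite /KK big1 // => b _; apply: cnt_out => //.
have := dval_ge0 hr b; move=> h; apply/orP; right; lra.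
Qed.

Lemma KK_r (p q m : nat) r0 : (KK p q m r0 0 + KK p q m r0 1 =
  \sum_(b : {ffun 'I_m -> Dt p q}) (cnt p q m (dval b + r0) + cnt p q m (dval b + r0 - 1)))%N.
Proof.
rewrite /KK -big_split; apply: eq_bigr => b _ /=.
congr (cnt _ _ _ _ + cnt _ _ _ _)%N; ring.
Qed.

Lemma KK_0r (p q m : nat) r0 : (KK p q m 0 r0 + KK p q m 1 r0 =
  \sum_(b : {ffun 'I_m -> Dt p q}) (cnt p q m (dval b + (1 - r0)) + cnt p q m (dval b + (1 - r0) - 1)))%N.
Proof.
rewrite addnC /KK -big_split; apply: eq_bigr => b _ /=.
congr (cnt _ _ _ _ + cnt _ _ _ _)%N; ring.
Qed.

Lemma NN_le5 (p q m : nat) (hr : 0 <= p%:Q / q%:Q <= 1) :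
  (NN p q m.+1 <= 5 * NN p q m)%N.
Proof.
apply: leq_trans (NN_succ_le p q m) _.
rewrite /digits !big_cons !big_nil !addn0 !KK_xx (KK_01 _ hr) (KK_10 _ hr).
have h1 := KK_r p q m (p%:Q / q%:Q).
have h2 := KK_0r p q m (p%:Q / q%:Q).
have h3 := @shift_le p q m hr (p%:Q / q%:Q) hr.
have h4 := @shift_le p q m hr (1 - p%:Q / q%:Q).
rewrite -h1 in h3; rewrite -h2 in h4.
have /h4 {}h4 : 0 <= 1 - p%:Q / q%:Q <= 1 by move: hr; lra.
move: h3 h4; clear h1 h2.
set a := KK _ _ _ _ 0; set b := KK _ _ _ _ 1; set c := KK _ _ _ 0 _; set d := KK _ _ _ 1 _.
rewrite !add0n; lia.
Qed.

Lemma Wsum m (f : 'I_m -> nat) :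
  (\sum_(i < m) (f i)%:R * (2%:Q ^- i.+1)) * 2 ^+ m =
  ((\sum_(i < m) f i * 2 ^ (m - i.+1))%N)%:R.
Proof.
rewrite mulr_suml natr_sum; apply: eq_bigr => i _.
rewrite natrM natrX -mulrA; congr (_ * _).
rewrite expfB_cond; first by rewrite mulrC.
by rewrite (_ : (2%:Q == 0) = false) // add0n.
Qed.

Lemma Ebound m (f : 'I_m -> bool) :
  (\sum_(i < m) f i * 2 ^ (m - i.+1) < 2 ^ m)%N.
Proof.
elim: m f => [|m IH] f; first by rewrite big_ord0.
rewrite big_ord_recl (_ : (m.+1 - ord0.+1 = m)%N); last by rewrite subSS subn0.
have := IH (fun i => f (lift ord0 i)).
rewrite (eq_bigr (fun i : 'I_m => f (lift ord0 i) * 2 ^ (m - i.+1))%N); last first.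
  by move=> i _.
rewrite expnS; case: (f ord0) => /=; lia.
Qed.

Definition Ef (p q m : nat) (g : Dt p q -> bool) (a : {ffun 'I_m -> Dt p q}) : nat :=
  (\sum_(i < m) g (a i) * 2 ^ (m - i.+1))%N.

Definition e1 (p q : nat) (d : Dt p q) : bool := ssval d == 1.
Definition er (p q : nat) (d : Dt p q) : bool := ssval d == p%:Q / q%:Q.

Lemma digitE (p q : nat) (hq : (0 < q)%N) (hr0 : p%:Q / q%:Q != 0)
  (hr1 : p%:Q / q%:Q != 1) (d : Dt p q) :
  q%:Q * ssval d = ((q * e1 d + p * er d)%N)%:R.
Proof.
rewrite /e1 /er; have := ssvalP d; rewrite !inE => /or3P [] /eqP ->.
- by rewrite eq_sym oner_eq0 eq_sym (negPf hr0) !muln0 mulr0.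
- by rewrite eqxx eq_sym (negPf hr1) muln0 muln1 addn0 mulr1.
- rewrite (negPf hr1) eqxx muln0 muln1 add0n mulrC divfK //.
  by rewrite pnatr_eq0 -lt0n.
Qed.

Lemma dvalE (p q m : nat) (hq : (0 < q)%N) (hr0 : p%:Q / q%:Q != 0)
  (hr1 : p%:Q / q%:Q != 1) (a : {ffun 'I_m -> Dt p q}) :
  q%:Q * dval a * 2 ^+ m = ((q * Ef (@e1 p q) a + p * Ef (@er p q) a)%N)%:R.
Proof.
rewrite /dval mulr_sumr.
rewrite (eq_bigr (fun i : 'I_m => ((q * e1 (a i) + p * er (a i))%N)%:R * 2%:Q ^- i.+1)); last first.
  by move=> i _; rewrite mulrA digitE.
rewrite Wsum /Ef; congr (_%:R).
rewrite !big_distrr -big_split /=; apply: eq_bigr => i _.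
by rewrite mulnDl !mulnA.
Qed.

Lemma noco (p q m : nat) (hq : (0 < q)%N) (hcop : coprime p q)
  (hr0 : p%:Q / q%:Q != 0) (hr1 : p%:Q / q%:Q != 1)
  (hbig : (2 ^ m.+1 <= q)%N) (j : nat) (hj : (j <= 1)%N)
  (a b : {ffun 'I_m -> Dt p q}) :
  dval a + j%:R != dval b + p%:Q / q%:Q.
Proof.
apply/negP => /eqP h.
have hqr : q%:Q * (p%:Q / q%:Q) = p%:Q.
  by rewrite mulrC divfK // pnatr_eq0 -lt0n.
have H : ((q * Ef (@e1 p q) a + p * Ef (@er p q) a + q * j * 2 ^ m)%N)%:R =
         ((q * Ef (@e1 p q) b + p * (Ef (@er p q) b + 2 ^ m))%N)%:R :> rat.
  have E1 := dvalE hq hr0 hr1 a; have E2 := dvalE hq hr0 hr1 b.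
  rewrite !natrD !natrM !natrX in E1 E2 *.
  rewrite !natrD natrX mulrDr addrA -E1 -E2.
  rewrite -!pmulrn in h hqr *.
  have ha : dval a = dval b + p%:R / q%:R - j%:R by rewrite -h addrK.
  rewrite ha; set Sb := dval b; set P := (p%:R : rat); set Q := (q%:R : rat);
  set J := (j%:R : rat); set T := (_ ^+ m : rat).
  have hq0 : Q != 0 by rewrite /Q pnatr_eq0 -lt0n.
  by field.
move/eqP: H; rewrite eqr_nat => /eqP H.
have bx := Ebound (fun i => er (a i)).
have by_ := Ebound (fun i => er (b i)).
rewrite -/(Ef _ a) in bx; rewrite -/(Ef _ b) in by_.
move: H bx by_.
set x := Ef (@er p q) a; set y0 := Ef (@er p q) b; set u := Ef (@e1 p q) a; set w := Ef (@e1 p q) b.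
move=> H bx by_.
set y := (y0 + 2 ^ m)%N in H.
have hxy : (x < y)%N by rewrite /y; lia.
have hd : (q %| p * (y - x))%N.
  rewrite mulnBr.
  have -> : (p * y - p * x = q * (u + j * 2 ^ m - w))%N.
    rewrite mulnBr mulnDr mulnA.
    move: H; set A := (q * u)%N; set B := (p * x)%N; set C := (q * j * 2 ^ m)%N;
      set D := (q * w)%N; set E := (p * y)%N; lia.
  exact: dvdn_mulr.
rewrite Gauss_dvdr in hd; last by rewrite coprime_sym.
have := dvdn_leq _ hd; rewrite subn_gt0 hxy => /(_ isT) hle.
move: hbig; rewrite expnS; lia.
Qed.

Lemma KK0 (p q m : nat) x y
  (H : forall a b : {ffun 'I_m -> Dt p q}, dval a != x + dval b - y) :
  KK p q m x y = 0%N.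
Proof.
rewrite /KK big1 // => b _; apply: eq_card0 => a; rewrite !inE.
exact: negPf (H a b).
Qed.

Lemma r_ne01 (p q : nat) (hq : (1 < q)%N) (hcop : coprime p q) :
  (p%:Q / q%:Q != 0) && (p%:Q / q%:Q != 1).
Proof.
have q0 : q%:Q != 0 by rewrite pnatr_eq0 -lt0n ltnW.
apply/andP; split.
  rewrite mulf_eq0 invr_eq0 negb_or q0 andbT pnatr_eq0.
  apply/negP => /eqP p0; move: hcop; rewrite p0 /coprime gcd0n => /eqP q1.
  by rewrite q1 in hq.
apply/negP => /eqP h.
have hpq : p%:Q = q%:Q by rewrite -[LHS](divfK q0) h mul1r.
move/eqP: hpq; rewrite eqr_nat => /eqP hpq.
by move: hcop; rewrite hpq /coprime gcdnn => /eqP q1; rewrite q1 in hq.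
Qed.

Lemma NN_le3 (p q m : nat) (hq : (0 < q)%N) (hcop : coprime p q)
  (hr : 0 <= p%:Q / q%:Q <= 1) (hbig : (2 ^ m.+1 <= q)%N) :
  (NN p q m.+1 <= 3 * NN p q m)%N.
Proof.
have hq1 : (1 < q)%N.
  apply: leq_trans hbig; have := expn_gt0 2 m; rewrite expnS; lia.
have /andP [hr0 hr1] := r_ne01 hq1 hcop.
have nc := noco hq hcop hr0 hr1 hbig.
apply: leq_trans (NN_succ_le p q m) _.
rewrite /digits !big_cons !big_nil !addn0 !KK_xx (KK_01 _ hr) (KK_10 _ hr).
rewrite !KK0 //; first lia.
all: move=> a b; apply/negP => /eqP h.
all: first [ (have /negP := nc 1%N isT a b; apply; apply/eqP; move: h; lra)
           | (have /negP := nc 0%N isT a b; apply; apply/eqP; move: h; lra)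
           | (have /negP := nc 1%N isT b a; apply; apply/eqP; move: h; lra)
           | (have /negP := nc 0%N isT b a; apply; apply/eqP; move: h; lra) ].
Qed.

Lemma NN_pos (p q m : nat) : (0 < NN p q m)%N.
Proof.
pose d0 : Dt p q := SeqSub (mem_head 0 _).
pose b0 : {ffun 'I_m -> Dt p q} := [ffun => d0].
rewrite NN_sum (bigD1 b0) //= ltn_addr // /cnt.
by apply/card_gt0P; exists b0; rewrite inE.
Qed.

Lemma esup_ge (R : realType) (u : (\bar R)^nat) (l : \bar R) :
  (forall k, (1 <= k)%N -> (l <= u k)%E) -> (l <= limn_esup u)%E.
Proof.
move=> H; rewrite limn_esup_lim; apply: lime_ge; first exact: is_cvg_esups.
near=> m; apply: (le_trans (H m.+1 isT)).
by apply: ereal_sup_ubound; exists m.+1 => //=.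
Unshelve. all: by end_near.
Qed.

Lemma Aent (R : realType) z (i j : 'I_4) : 0 <= Amat R z i j.
Proof.
case: z => [[] []]; rewrite mxE;
case: i => [[|[|[|[|i]]]] Hi] //=; case: j => [[|[|[|[|j]]]] Hj] //=; lra.
Qed.

Lemma A00ge1 (R : realType) z : 1 <= Amat R z 0 0.
Proof. case: z => [[] []]; rewrite mxE /=; lra. Qed.

Lemma Acol (R : realType) z (k : 'I_4) : 2 <= \sum_(j < 4) Amat R z j k.
Proof.
rewrite !big_ord_recl big_ord0.
case: z => [[] []]; rewrite !mxE;
case: k => [[|[|[|[|k]]]] Hk] //=; lra.
Qed.

Lemma Azz_col (R : realType) (i : 'I_4) :
  Amat R (false, false) i 0 = (i == 0 :> nat)%:R * 3.
Proof. rewrite mxE; case: i => [[|[|[|[|i]]]] Hi] //=; lra. Qed.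

Definition Pcol (R : realType) (M : 'M[R]_4) :=
  (forall i, 0 <= M i 0) /\ 1 <= M 0 0.

Lemma Aprod_rec (R : realType) z a k :
  Aprod R z a (a + k.+1) = Amat R (z a) *m Aprod R z a.+1 (a + k.+1).
Proof. by rewrite /Aprod big_ltn // addnS ltnS leq_addr. Qed.

Lemma Pcol_prod (R : realType) z k a : Pcol (Aprod R z a (a + k)).
Proof.
elim: k a => [|k IH] a.
  rewrite /Aprod addn0 big_geq // /Pcol; split; last by rewrite mxE.
  by move=> i; rewrite mxE; case: (i == 0); rewrite ?ler01 ?lexx.
rewrite Aprod_rec; have [H1 H2] : Pcol (Aprod R z a.+1 (a + k.+1)).
  by rewrite addnS -addSn; apply: IH.
split.
  move=> i; rewrite mxE; apply: sumr_ge0 => j _; apply: mulr_ge0 => //.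
  exact: Aent.
rewrite mxE (bigD1 0) //=.
apply: (le_trans (y := Amat R (z a) 0 0 * Aprod R z a.+1 (a + k.+1) 0 0)).
  by apply: mulr_ege1 => //; exact: A00ge1.
rewrite lerDl; apply: sumr_ge0 => j _; apply: mulr_ge0 => //; exact: Aent.
Qed.

Lemma colsum_mul (R : realType) z (M : 'M[R]_4) :
  Pcol M -> 2 * colsum0 M <= colsum0 (Amat R z *m M).
Proof.
move=> [H1 H2]; rewrite /colsum0.
under [X in _ <= X]eq_bigr do rewrite mxE.
rewrite exchange_big /= mulr_sumr; apply: ler_sum => k _.
rewrite -mulr_suml; apply: ler_wpM2r => //; exact: Acol.
Qed.

Lemma colsum_pos (R : realType) (M : 'M[R]_4) : Pcol M -> 0 < colsum0 M.
Proof.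
move=> [H1 H2]; rewrite /colsum0 (bigD1 0) //=.
apply: (lt_le_trans (y := M 0 0)); first lra.
by rewrite lerDl; apply: sumr_ge0.
Qed.

Lemma phi_ge_ln2 (R : realType) z : ((ln 2 : R)%:E <= phi R z)%E.
Proof.
apply: esup_ge => k hk; rewrite lee_fin.
have -> : k = (0 + (k.-1).+1)%N by rewrite add0n prednK.
rewrite Aprod_rec add0n.
have hP : Pcol (Aprod R z 1 k.-1.+1).
  by have := Pcol_prod R z k.-1 1; rewrite add1n.
have h0 := colsum_pos hP; have h1 := colsum_mul (z 0%N) hP.
rewrite ler_ln ?posrE //; last first.
  by apply: divr_gt0 => //; lra.
by rewrite ler_pdivlMr //.
Qed.

Lemma zz_col (R : realType) k a (i : 'I_4) :
  Aprod R (fun=> (false, false)) a (a + k) i 0 = (i == 0 :> nat)%:R * 3 ^+ k.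
Proof.
elim: k a i => [|k IH] a i.
  rewrite /Aprod addn0 big_geq // mxE expr0 mulr1.
  by case: i => [[|i] Hi].
rewrite Aprod_rec mxE (bigD1 0) //= big1 ?addr0; last first.
  move=> j hj; rewrite addnS -addSn IH.
  by rewrite (_ : (j == 0 :> nat) = false) ?mul0r ?mulr0 //; apply/negP => /eqP h; apply/negP: hj; rewrite negbK; apply/eqP/val_inj.
by rewrite addnS -addSn IH Azz_col /= mul1r exprS mulrA.
Qed.

Lemma phi_zz (R : realType) : ((ln 3 : R)%:E <= phi R (fun=> (false, false)))%E.
Proof.
apply: esup_ge => k hk; rewrite lee_fin.
have cs a j : colsum0 (Aprod R (fun=> (false, false)) a (a + j)) = 3 ^+ j.
  rewrite /colsum0 !big_ord_recl big_ord0 !zz_col /=; lra.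
have := cs 0%N k; have := cs 1%N k.-1.
rewrite add0n add1n prednK // => -> ->.
rewrite -{1}(prednK hk) exprS mulfK; first exact: lexx.
by rewrite expf_neq0 //; lra.
Qed.

Lemma bitsum0 n k : (k < 2 ^ n)%N -> (\sum_(i < n) odd (k %/ 2 ^ i) * 2 ^ i)%N = k.
Proof.
elim: n k => [|n IH] k hk; first by rewrite big_ord0; move: hk; rewrite expn0; lia.
rewrite big_ord_recl expn0 divn1 muln1.
have e (i : 'I_n) : (odd (k %/ 2 ^ (lift ord0 i)) * 2 ^ (lift ord0 i) =
    2 * (odd (k./2 %/ 2 ^ i) * 2 ^ i))%N.
  by rewrite lift0 expnS divnMA divn2 mulnCA.
rewrite (eq_bigr _ (fun i _ => e i)) -big_distrr /= IH.
  by rewrite mul2n odd_double_half.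
by rewrite -divn2 ltn_divLR // -expnSr.
Qed.

Lemma bitsum n k : (k < 2 ^ n)%N ->
  (\sum_(i < n) odd (k %/ 2 ^ (n - i.+1)) * 2 ^ (n - i.+1))%N = k.
Proof.
move=> hk; rewrite (reindex_inj rev_ord_inj) /=; rewrite -[RHS](bitsum0 hk).
apply: eq_bigr => i _.
have -> : (n - (n - i.+1).+1 = i)%N by have := ltn_ord i; lia.
by [].
Qed.

Lemma bitQ n k : (k < 2 ^ n)%N ->
  \sum_(i < n) (nat_of_bool (odd (k %/ 2 ^ (n - i.+1))))%:Q * 2%:Q ^- i.+1
  = k%:Q / 2 ^+ n.
Proof.
move=> hk; have h2 : (2%:Q ^+ n != 0) by rewrite expf_neq0.
apply: (mulIf h2); rewrite divfK //.
under eq_bigr do rewrite -pmulrn.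
by rewrite (Wsum (fun i : 'I_n => nat_of_bool (odd (k %/ 2 ^ (n - i.+1))))) bitsum // -pmulrn.
Qed.

Definition xone (p q n : nat) : {ffun 'I_n -> B} :=
  [ffun i : 'I_n => (odd (q %/ 2 ^ (n - i.+1)), odd (p %/ 2 ^ (n - i.+1)))].
Definition xzero (n : nat) : {ffun 'I_n -> B} := [ffun => (false, false)].

Lemma xone_in (p q n : nat) : (p <= q)%N -> (q < 2 ^ n)%N -> xone p q n \in Zset p q n.
Proof.
move=> hpq hq; rewrite inE.
under eq_bigr do rewrite ffunE /=.
under [X in _ - _ * X]eq_bigr do rewrite ffunE /=.
rewrite !bitQ //; last by apply: leq_ltn_trans hq.
by rewrite !mulrA (mulrC p%:Q) subrr.
Qed.

Lemma xzero_in (p q n : nat) : xzero n \in Zset p q n.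
Proof.
rewrite inE !big1 ?mulr0 ?subrr // => i _; by rewrite ffunE /= mul0r.
Qed.

Lemma xone_neq (p q n : nat) : (0 < q)%N -> (q < 2 ^ n)%N -> xone p q n != xzero n.
Proof.
move=> hq0 hq; apply/negP => /eqP e.
have := congr1 (fun x : {ffun 'I_n -> B} =>
   (\sum_(i < n) (nat_of_bool (x i).1) * 2 ^ (n - i.+1))%N) e.
rewrite /=; under eq_bigr do rewrite ffunE /=.
rewrite bitsum // big1 => [h|i _]; last by rewrite ffunE.
by rewrite h in hq0.
Qed.

Definition yext (n : nat) (x : {ffun 'I_n -> B}) : nat -> B :=
  fun k => if @insub _ (fun k => k < n)%N _ k is Some i then x i else (false, false).

Lemma yext_cyl (n : nat) (x : {ffun 'I_n -> B}) : cyl x (yext x).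
Proof. by move=> i; rewrite /yext valK. Qed.

Lemma ln_ratio (R : realType) (N N' c : nat) : (0 < N')%N -> (0 < N)%N ->
  (N <= c * N')%N -> ln (N%:R / N'%:R : R) <= ln (c%:R : R).
Proof.
move=> h1 h2 h3.
have hc : (0 < c)%N by rewrite lt0n; apply/eqP => c0; move: h3; rewrite c0 mul0n; lia.
rewrite ler_ln ?posrE ?ltr0n // ?divr_gt0 ?ltr0n //.
by rewrite ler_pdivrMr ?ltr0n // -natrM ler_nat.
Qed.

Unset Implicit Arguments.

Theorem theorem7p6 (R : realType) (p q : nat) (n : nat)
  (hq : (0 < q)%N) (hcop : coprime p q)
  (hpq : 0 <= p%:Q / q%:Q <= 1) (hn : (2 <= n)%N) :
  ((ln ((NN p q n)%:R / (NN p q n.-1)%:R : R))%:E <=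
   \sum_(x in Zset p q n) ereal_sup [set phi R y | y in cyl x])%E.
Proof.
case: n hn => [//|m] hm; rewrite succnK.
set f := fun x : {ffun 'I_m.+1 -> B} => ereal_sup [set phi R y | y in cyl x].
have ln2_ge0 : (0 : R) <= ln 2 by apply: ln_ge0; lra.
have f_ge x : ((ln 2 : R)%:E <= f x)%E.
  apply: le_trans (phi_ge_ln2 R (yext x)) _.
  by apply: ereal_sup_ubound; exists (yext x) => //; exact: yext_cyl.
have f_ge0 x : (0 <= f x)%E by apply: le_trans (f_ge x); rewrite lee_fin.
have f0 : ((ln 3 : R)%:E <= f (xzero m.+1))%E.
  apply: le_trans (phi_zz R) _.
  by apply: ereal_sup_ubound; exists (fun=> (false, false)) => // i; rewrite ffunE.
have hpq' : (p <= q)%N.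
  move: hpq => /andP [_]; rewrite ler_pdivrMr ?ltr0n // mul1r.
  by rewrite -!pmulrn ler_nat.
have hN' := NN_pos p q m; have hN := NN_pos p q m.+1.
rewrite (bigD1 (xzero m.+1)) ?xzero_in //=.
case: (leqP (2 ^ m.+1) q) => hbig.
  apply: le_trans (leeDl _ _); last by apply: sume_ge0 => x _; exact: f_ge0.
  apply: le_trans f0; rewrite lee_fin.
  exact: ln_ratio hN' hN (NN_le3 hq hcop hpq hbig).
rewrite (bigD1 (xone p q m.+1)) /=; last first.
  by rewrite xone_in // xone_neq.
apply: le_trans (leeD f0 (leeDl _ _)); last by apply: sume_ge0 => x _; exact: f_ge0.
apply: le_trans (leeD (lexx _) (f_ge _)).
rewrite -EFinD lee_fin -lnM ?posrE //.
have -> : (3 * 2 : R) = 6%:R by rewrite -natrM.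
apply: ln_ratio hN' hN _.
by apply: leq_trans (NN_le5 m hpq) _; rewrite leq_mul2r leqnSn orbT.
Qed.
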